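(* Let $S=(A,\mathrm{in},\mathrm{out},s_0,P)$ be a protocol with $A=\{\mathsf v,\mathsf c,\mathsf e\}$ whose coerced-voter programs are of the form $p_1\parallel\cdots\parallel p_n$ with $p_i\in\mathrm{Proc}(I_i,O_i)$, let $S_1,\dots,S_n$ be the derived single-voter protocols, and let $T,T_1,\dots,T_n$ be the coercion systems induced by $S,S_1,\dots,S_n$. Let $\alpha_0,\dots,\alpha_n$ and $\gamma_1,\dots,\gamma_n$ be sets of runs of $T$. If for each $i\in\{1,\dots,n\}$ the system $T_i$ is coercion resistant for $(\alpha_0,\dots,\alpha_n)$ w.r.t. $\gamma_i$ (with properties of $T$ viewed as properties of $T_i$ via $\rho\mapsto\rho^{(i)}$), then $T$ is multi-voter coercion resistant in $\alpha_n$ w.r.t. $\gamma_1\cap\dots\cap\gamma_n$.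
   Context: Protocols and induced coercion systems are as follows. A protocol is $S=(A,\mathrm{in},\mathrm{out},s_0,P)$ with agents $A$, input/output channel sets $\mathrm{in}(a),\mathrm{out}(a)$ (input sets of distinct agents disjoint), initial output sequence $s_0$, and for each agent a set $P(a)$ of processes over its channels, closed under renaming of nonces ($\simeq$). Processes are finite sets of atomic processes (functions from views of received messages to output messages) with disjoint input channels and nonces; $\mathrm{Proc}(I,O)$ denotes all processes with input channels in $I$ and output channels in $O$; $\parallel$ is union of non-conflicting processes. For $A=\{\mathsf v,\mathsf c,\mathsf e\}$ the induced coercion system $(R,V,C,E,r,\sim)$ has $V=P(\mathsf v)$, $C=P(\mathsf c)$, $E=P(\mathsf e)$, $R$ the tuples $(v,c,e,\pi)$ with $\pi$ a fair run (initiated by $s_0$) of $v\parallel c\parallel e$, $r(v,c,e)$ the set of such tuples $(\hat v,\hat c,\hat e,\pi)$ with $\hat v\simeq v,\hat c\simeq c,\hat e\simeq e$, and $(v,c,e,\pi)\sim(v',c',e',\pi')$ iff $c=c'$ and $\pi,\pi'$ are statically equivalent w.r.t. the input channels and nonces of $c$ (the coercer's view). Setting: $\mathrm{in}(\mathsf v)=I_1\cup\dots\cup I_n$, $\mathrm{out}(\mathsf v)=O_1\cup\dots\cup O_n$, and each program of $\mathsf v$ is $p_1\parallel\cdots\parallel p_n$ where $p_i\in\mathrm{Proc}(I_i,O_i)$ is the program of coerced voter $\mathsf v_i$. For $i\in\{1,\dots,n\}$ and $W=\{1,\dots,n\}\setminus\{i\}$, $S_i=(A,\mathrm{in}_i,\mathrm{out}_i,s_0,P_i)$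 with $\mathrm{in}_i(\mathsf v)=I_i$, $\mathrm{out}_i(\mathsf v)=O_i$, $\mathrm{in}_i(\mathsf c)=\mathrm{in}(\mathsf c)\cup\bigcup_{j\in W}I_j$, $\mathrm{out}_i(\mathsf c)=\mathrm{out}(\mathsf c)\cup\bigcup_{j\in W}O_j$, $\mathrm{in}_i(\mathsf e)=\mathrm{in}(\mathsf e)$, $\mathrm{out}_i(\mathsf e)=\mathrm{out}(\mathsf e)$, $P_i(\mathsf e)=P(\mathsf e)$, $P_i(\mathsf v)=\mathrm{Proc}(\mathrm{in}_i(\mathsf v),\mathrm{out}_i(\mathsf v))$, $P_i(\mathsf c)=\mathrm{Proc}(\mathrm{in}_i(\mathsf c),\mathrm{out}_i(\mathsf c))$. For a run $\rho=((v_1\parallel\cdots\parallel v_n),c,e,\pi)$ of $T$, $\rho^{(i)}=(v_i,(v_1\parallel\cdots\parallel v_{i-1}\parallel v_{i+1}\parallel\cdots\parallel v_n\parallel c),e,\pi)$, a run of $T_i$; for $\beta\subseteq R$, $\beta^{(i)}=\{\rho^{(i)}:\rho\in\beta\}$. A system $(R,V,C,E,r,\sim)$ is coercion resistant for $(\alpha_0,\dots,\alpha_n)$ w.r.t. $\gamma$ if for each $v\in V$ there is $v'\in V$ with: (i) for every $k\in\{1,\dots,n\}$, $c\in C$, $e\in E$, $\rho\in r(v,c,e)\cap\alpha_k$ there exist $e'\in E$ and $\rho'\in r(v',c,e')\cap\alpha_{k-1}$ with $\rho\sim\rho'$; (ii) for every $k\in\{1,\dots,n\}$, $c\in C$, $e\in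 E$, $\rho\in r(v',c,e)\cap\alpha_k$ there exist $e'\in E$ and $\rho'\in r(v,c,e')\cap\alpha_{k-1}$ with $\rho\sim\rho'$; (iii) $r(v',c,e)\subseteq\gamma$ for all $c\in C,e\in E$. Multi-voter coercion resistance of $T$ in $\alpha$ w.r.t. $\gamma$: there exist maps $f_i$ ($i=1,\dots,n$) sending each single-voter strategy $v_i\in\mathrm{Proc}(I_i,O_i)$ to a single-voter strategy $f_i(v_i)\in\mathrm{Proc}(I_i,O_i)$ such that for every $v=(v_1\parallel\cdots\parallel v_n)\in V$, the program $v'=(f_1(v_1)\parallel\cdots\parallel f_n(v_n))$ satisfies: (i) for all $c\in C,e\in E,\rho\in r(v,c,e)\cap\alpha$ there are $e'\in E$, $\rho'\in r(v',c,e')$ with $\rho\sim\rho'$; (ii) for all $c\in C,e\in E,\rho\in r(v',c,e)\cap\alpha$ there are $e'\in E$, $\rho'\in r(v,c,e')$ with $\rho\sim\rho'$; (iii) $r(v',c,e)\subseteq\gamma$ for all $c,e$. *)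

(* Defs.v *)
From Stdlib Require Import List.
Import ListNotations.
Set Implicit Arguments.

(* Atomic processes, messages, runs, fair runs and static equivalence are
   kept abstract; only the structural facts that hold in the paper's
   concrete model are assumed. *)
Record Model := {
  Ch : Type;
  Msg : Type;
  AP : Type;
  Run : Type;
  ain : AP -> Ch;
  aout : AP -> Ch -> Prop;
  anon : AP -> list nat;
  aren : (nat -> nat) -> AP -> AP;
  (* fair_run s0 p pi : pi is a fair run of process p initiated by s0 *)
  fair_run : list (Ch * Msg) -> (AP -> Prop) -> Run -> Prop;
  (* steq C N pi pi' : pi, pi' statically equivalent w.r.t. channels C, nonces N *)
  steq : (Ch -> Prop) -> (nat -> Prop) -> Run -> Run -> Prop;
  aren_ain : forall s a, ain (aren s a) = ain a;
  aren_aout : forall s a x, aout (aren s a) x <-> aout a x;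
  aren_anon : forall s a, anon (aren s a) = map s (anon a);
  aren_id : forall a, aren (fun x => x) a = a;
  aren_comp : forall s t a, aren s (aren t a) = aren (fun x => s (t x)) a;
  aren_ext : forall s t a, (forall x, In x (anon a) -> s x = t x) -> aren s a = aren t a;
  steq_refl : forall C N pi, steq C N pi pi;
  steq_sym : forall C N pi pi', steq C N pi pi' -> steq C N pi' pi;
  steq_trans : forall C N pi1 pi2 pi3,
      steq C N pi1 pi2 -> steq C N pi2 pi3 -> steq C N pi1 pi3;
  steq_mono : forall (C C' : Ch -> Prop) (N N' : nat -> Prop) pi pi',
      (forall x, C x -> C' x) -> (forall x, N x -> N' x) ->
      steq C' N' pi pi' -> steq C N pi pi'
}.

Arguments ain {m}. Arguments aout {m}. Arguments anon {m}. Arguments aren {m}.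

Section Framework.
Variable M : Model.

Definition proc := AP M -> Prop.

Definition is_proc (I O : Ch M -> Prop) (p : proc) : Prop :=
  (exists l : list (AP M), forall a, p a <-> In a l) /\
  (forall a, p a -> I (ain a) /\ (forall x, aout a x -> O x)) /\
  (forall a b, p a -> p b -> a <> b ->
     ain a <> ain b /\ (forall x, In x (anon a) -> In x (anon b) -> False)).

(* parallel composition (union; it is a process iff non-conflicting) *)
Definition par (p q : proc) : proc := fun a => p a \/ q a.
Definition bigpar (n : nat) (ps : nat -> proc) : proc :=
  fun a => exists i, i < n /\ ps i a.
Definition restr (p : proc) (C : Ch M -> Prop) : proc := fun a => p a /\ C (ain a).

Definition bij (s : nat -> nat) : Prop :=
  exists t, (forall x, t (s x) = x) /\ (forall y, s (t y) = y).
Definition renames (p q : proc) : Prop :=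
  exists s, bij s /\ (forall b, q b <-> exists a, p a /\ b = aren s a).

Definition chans (p : proc) : Ch M -> Prop := fun x => exists a, p a /\ ain a = x.
Definition nons (p : proc) : nat -> Prop := fun m => exists a, p a /\ In m (anon a).

Inductive agent := Voter | Coercer | Env.

Record protocol := {
  pin : agent -> Ch M -> Prop;
  pout : agent -> Ch M -> Prop;
  ps0 : list (Ch M * Msg M);
  pP : agent -> proc -> Prop
}.

Definition is_protocol (S : protocol) : Prop :=
  (forall a b, a <> b -> forall x, pin S a x -> pin S b x -> False) /\
  (forall a p, pP S a p -> is_proc (pin S a) (pout S a) p) /\
  (forall a p q, pP S a p -> renames p q -> pP S a q).

Record run4 := mkrun { rv : proc; rc : proc; re : proc; rpi : Run M }.

Record csys := {
  cR : run4 -> Prop;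
  cV : proc -> Prop;
  cC : proc -> Prop;
  cE : proc -> Prop;
  cr : proc -> proc -> proc -> run4 -> Prop;
  csim : run4 -> run4 -> Prop
}.

(* pi is a fair run (initiated by s0) of v || c || e (which must be defined,
   i.e. non-conflicting) *)
Definition runs_of (S : protocol) (v c e : proc) (pi : Run M) : Prop :=
  is_proc (fun _ => True) (fun _ => True) (par v (par c e)) /\
  fair_run M (ps0 S) (par v (par c e)) pi.

Definition induced (S : protocol) : csys := {|
  cR := fun rho => pP S Voter (rv rho) /\ pP S Coercer (rc rho) /\
                   pP S Env (re rho) /\ runs_of S (rv rho) (rc rho) (re rho) (rpi rho);
  cV := pP S Voter;
  cC := pP S Coercer;
  cE := pP S Env;
  cr := fun v c e rho => renames v (rv rho) /\ renames c (rc rho) /\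
                         renames e (re rho) /\ runs_of S (rv rho) (rc rho) (re rho) (rpi rho);
  csim := fun rho rho' => rc rho = rc rho' /\
            steq M (chans (rc rho)) (nons (rc rho)) (rpi rho) (rpi rho')
|}.

Definition coercion_resistant (T : csys) (n : nat)
    (alpha : nat -> run4 -> Prop) (gamma : run4 -> Prop) : Prop :=
  forall v, cV T v -> exists v', cV T v' /\
    (forall k c e rho, 1 <= k <= n -> cC T c -> cE T e ->
       cr T v c e rho -> alpha k rho ->
       exists e' rho', cE T e' /\ cr T v' c e' rho' /\ alpha (k - 1) rho' /\ csim T rho rho') /\
    (forall k c e rho, 1 <= k <= n -> cC T c -> cE T e ->
       cr T v' c e rho -> alpha k rho ->
       exists e' rho', cE T e' /\ cr T v c e' rho' /\ alpha (k - 1) rho' /\ csim T rho rho') /\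
    (forall c e rho, cC T c -> cE T e -> cr T v' c e rho -> gamma rho).

(* Multi-voter coercion resistance of T in alpha w.r.t. gamma
   (voters indexed 0 .. n-1, voter i has channels I i, O i). *)
Definition mv_coercion_resistant (T : csys) (n : nat) (I O : nat -> Ch M -> Prop)
    (alpha gamma : run4 -> Prop) : Prop :=
  exists f : nat -> proc -> proc,
    (forall i vi, i < n -> is_proc (I i) (O i) vi -> is_proc (I i) (O i) (f i vi)) /\
    forall vs : nat -> proc,
      (forall i, i < n -> is_proc (I i) (O i) (vs i)) ->
      cV T (bigpar n vs) ->
      let v := bigpar n vs in
      let v' := bigpar n (fun i => f i (vs i)) in
      (forall c e rho, cC T c -> cE T e -> cr T v c e rho -> alpha rho ->
         exists e' rho', cE T e' /\ cr T v' c e' rho' /\ csim T rho rho') /\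
      (forall c e rho, cC T c -> cE T e -> cr T v' c e rho -> alpha rho ->
         exists e' rho', cE T e' /\ cr T v c e' rho' /\ csim T rho rho') /\
      (forall c e rho, cC T c -> cE T e -> cr T v' c e rho -> gamma rho).

Definition others (n : nat) (X : nat -> Ch M -> Prop) (i : nat) : Ch M -> Prop :=
  fun x => exists j, j < n /\ j <> i /\ X j x.

Definition single_voter (S : protocol) (n : nat) (I O : nat -> Ch M -> Prop) (i : nat)
  : protocol :=
  let in_i := fun a => match a with
                       | Voter => I i
                       | Coercer => fun x => pin S Coercer x \/ others n I i x
                       | Env => pin S Env end in
  let out_i := fun a => match a with
                        | Voter => O i
                        | Coercer => fun x => pout S Coercer x \/ others n O i x
                        | Env => pout S Env end in
  {| pin := in_i;
     pout := out_i;
     ps0 := ps0 S;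
     pP := fun a => match a with
                    | Voter => is_proc (in_i Voter) (out_i Voter)
                    | Coercer => is_proc (in_i Coercer) (out_i Coercer)
                    | Env => pP S Env end |}.

Definition proj_run (n : nat) (I : nat -> Ch M -> Prop) (i : nat) (rho : run4) : run4 :=
  mkrun (restr (rv rho) (I i))
        (par (restr (rv rho) (others n I i)) (rc rho))
        (re rho) (rpi rho).

Definition proj_set (n : nat) (I : nat -> Ch M -> Prop) (i : nat) (beta : run4 -> Prop)
  : run4 -> Prop :=
  fun rho' => exists rho, beta rho /\ rho' = proj_run n I i rho.

End Framework.

(* Main.v *)
Require Import Defs.
From Stdlib Require Import List Lia Arith Classical ClassicalEpsilon FunctionalExtensionality PropExtensionality.
Import ListNotations.

Lemma pext {M : Model} (p q : proc M) : (forall a, p a <-> q a) -> p = q.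
Proof. intro H. apply functional_extensionality; intro a.
  apply propositional_extensionality; apply H. Qed.

Definition fin {M : Model} (p : proc M) := exists l : list (AP M), forall a, p a <-> In a l.

Lemma fin_sub {M : Model} (p q : proc M) : fin p -> (forall a, q a -> p a) -> fin q.
Proof.
  intros [l Hl] Hs.
  assert (H: exists l', forall a, q a <-> (In a l' )) .
  { assert (G: forall l0, exists l', forall a, In a l' <-> (In a l0 /\ q a)).
    { induction l0 as [|x l0 IH].
      - exists []. simpl. tauto.
      - destruct IH as [l' Hl']. destruct (classic (q x)) as [Hq|Hq].
        + exists (x :: l'). intro a. simpl. rewrite Hl'. split.
          * intros [<-|H]; tauto.
          * intros [[<-|H] H']; tauto.
        + exists l'. intro a. simpl. rewrite Hl'. split; [tauto|].
          intros [[<-|H] H']; tauto. }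
    destruct (G l) as [l' Hl']. exists l'. intro a. rewrite Hl', <- Hl.
    split; [intro; split; auto|tauto]. }
  exact H.
Qed.

Lemma fin_union {M : Model} (p q : proc M) : fin p -> fin q -> fin (par p q).
Proof. intros [l1 H1] [l2 H2]. exists (l1 ++ l2). intro a. unfold par.
  rewrite in_app_iff, H1, H2. tauto. Qed.

Lemma fin_bigpar {M : Model} n (u : nat -> proc M) :
  (forall j, j < n -> fin (u j)) -> fin (bigpar n u).
Proof.
  induction n; intro H.
  - exists []. intro a. unfold bigpar. simpl. split; [intros [i [Hi _]]; lia|tauto].
  - destruct (IHn (fun j Hj => H j (Nat.lt_lt_succ_r _ _ Hj))) as [l1 H1].
    destruct (H n (Nat.lt_succ_diag_r n)) as [l2 H2].
    exists (l1 ++ l2). intro a. rewrite in_app_iff, <- H1, <- H2. unfold bigpar.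
    split.
    + intros [i [Hi Ha]]. destruct (Nat.eq_dec i n) as [->|Hne]; [right; auto|].
      left. exists i. split; [lia|auto].
    + intros [[i [Hi Ha]]|Ha]; [exists i; split; [lia|auto]|exists n; split; [lia|auto]].
Qed.

Lemma bij_inj (s : nat -> nat) : bij s -> forall x y, s x = s y -> x = y.
Proof. intros [t [H1 H2]] x y E. rewrite <- (H1 x), <- (H1 y), E. reflexivity. Qed.

Lemma bij_id : bij (fun x => x).
Proof. exists (fun x => x). split; reflexivity. Qed.

Lemma bij_comp s t : bij s -> bij t -> bij (fun x => s (t x)).
Proof. intros [s' [A1 A2]] [t' [B1 B2]]. exists (fun y => t' (s' y)).
  split; intro; [rewrite A1, B1|rewrite B2, A2]; reflexivity. Qed.

Definition swap (p q x : nat) := if Nat.eq_dec x p then q else if Nat.eq_dec x q then p else x.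

Lemma swap_inv p q x : swap p q (swap p q x) = x.
Proof. unfold swap. repeat (destruct Nat.eq_dec; subst; try congruence). Qed.

Lemma bij_swap p q : bij (swap p q).
Proof. exists (swap p q). split; intro; apply swap_inv. Qed.

Lemma extend_inj (L : list nat) (g : nat -> nat) :
  (forall x y, In x L -> In y L -> g x = g y -> x = y) ->
  exists s, bij s /\ forall x, In x L -> s x = g x.
Proof.
  induction L as [|a L IH]; intro Hg.
  - exists (fun x => x). split; [apply bij_id|simpl; tauto].
  - destruct IH as [t [Ht Htg]].
    { intros x y Hx Hy. apply Hg; simpl; auto. }
    destruct (in_dec Nat.eq_dec a L) as [Ha|Ha].
    + exists t. split; auto. intros x [<-|Hx]; apply Htg; auto.
    + exists (fun x => swap (g a) (t a) (t x)). split.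
      * apply bij_comp; [apply bij_swap|auto].
      * intros x [<-|Hx].
        -- unfold swap. destruct Nat.eq_dec; [congruence|].
           destruct Nat.eq_dec; congruence.
        -- rewrite (Htg x Hx). unfold swap. destruct Nat.eq_dec as [E|].
           ++ exfalso. assert (x = a) by (apply Hg; simpl; auto). subst; tauto.
           ++ destruct Nat.eq_dec as [E|]; auto. exfalso.
              rewrite <- (Htg x Hx) in E. apply (bij_inj _ Ht) in E. subst; tauto.
Qed.

Lemma renames_refl {M : Model} (p : proc M) : renames p p.
Proof. exists (fun x => x). split; [apply bij_id|]. intro b. split.
  - intro H. exists b. rewrite aren_id. auto.
  - intros [a [Ha ->]]. rewrite aren_id. auto. Qed.

Lemma renames_sym {M : Model} (p q : proc M) : renames p q -> renames q p.
Proof.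
  intros [s [[t [H1 H2]] Hq]]. exists t. split; [exists s; split; auto|].
  intro a. split.
  - intro Ha. exists (aren s a). split; [apply Hq; eauto|].
    rewrite aren_comp. rewrite <- (aren_id _ a) at 1. apply aren_ext. intros; auto.
  - intros [b [Hb ->]]. apply Hq in Hb. destruct Hb as [a [Ha ->]].
    rewrite aren_comp. replace (aren (fun x => t (s x)) a) with (aren (fun x => x) a).
    + rewrite aren_id; auto.
    + apply aren_ext. intros; auto.
Qed.

Lemma renames_trans {M : Model} (p q r : proc M) : renames p q -> renames q r -> renames p r.
Proof.
  intros [s [Hs Hq]] [t [Ht Hr]]. exists (fun x => t (s x)). split; [apply bij_comp; auto|].
  intro c. rewrite Hr. split.
  - intros [b [Hb ->]]. apply Hq in Hb. destruct Hb as [a [Ha ->]]. exists a.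
    rewrite aren_comp; auto.
  - intros [a [Ha ->]]. exists (aren s a). split; [apply Hq; eauto|]. rewrite aren_comp; auto.
Qed.

Lemma renames_proc {M : Model} I O (p q : proc M) : renames p q -> is_proc I O p -> is_proc I O q.
Proof.
  intros [s [Hs Hq]] [[l Hl] [H1 H2]]. split; [|split].
  - exists (map (aren s) l). intro b. rewrite Hq, in_map_iff. split.
    + intros [a [Ha ->]]. exists a. split; auto. apply Hl; auto.
    + intros [a [<- Ha]]. exists a. split; auto. apply Hl; auto.
  - intros b Hb. apply Hq in Hb. destruct Hb as [a [Ha ->]]. rewrite aren_ain.
    destruct (H1 a Ha) as [Hi Ho]. split; auto. intros x Hx. apply Ho. apply (proj1 (aren_aout _ s a x)); auto.
  - intros b1 b2 Hb1 Hb2 Hne. apply Hq in Hb1. apply Hq in Hb2.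
    destruct Hb1 as [a1 [Ha1 ->]]. destruct Hb2 as [a2 [Ha2 ->]].
    assert (a1 <> a2) by (intro; subst; auto).
    destruct (H2 a1 a2 Ha1 Ha2 H) as [Hc Hn]. rewrite !aren_ain. split; auto.
    intros x. rewrite !aren_anon, !in_map_iff. intros [y1 [<- Hy1]] [y2 [E Hy2]].
    apply (bij_inj _ Hs) in E. subst. eauto.
Qed.

Lemma renames_decomp {M : Model} n (I : nat -> Ch M -> Prop) (u : nat -> proc M) X :
  (forall i j x, i < n -> j < n -> i <> j -> I i x -> I j x -> False) ->
  (forall j a, j < n -> u j a -> I j (ain a)) ->
  renames (bigpar n u) X -> forall j, j < n -> renames (u j) (restr X (I j)).
Proof.
  intros HD Hu [s [Hs HX]] j Hj. exists s. split; auto. intro b. unfold restr. rewrite HX.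
  split.
  - intros [[a [[j' [Hj' Ha]] ->]] Hc]. rewrite aren_ain in Hc.
    destruct (Nat.eq_dec j j') as [<-|Hne]; [eauto|].
    exfalso. eapply (HD j j'); eauto.
  - intros [a [Ha ->]]. split; [exists a; split; auto; exists j; auto|].
    rewrite aren_ain. auto.
Qed.

Lemma renames_glue {M : Model} n (I : nat -> Ch M -> Prop) (u : nat -> proc M) X :
  (forall i j x, i < n -> j < n -> i <> j -> I i x -> I j x -> False) ->
  (forall j, j < n -> fin (u j)) ->
  (forall j a, j < n -> u j a -> I j (ain a)) ->
  (forall j j' x, j < n -> j' < n -> j <> j' -> nons (u j) x -> nons (u j') x -> False) ->
  (forall a b, X a -> X b -> a <> b -> forall x, In x (anon a) -> In x (anon b) -> False) ->
  (forall a, X a -> exists j, j < n /\ I j (ain a)) ->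
  (forall j, j < n -> renames (u j) (restr X (I j))) ->
  renames (bigpar n u) X.
Proof.
  intros HD Hf Hu Hnd HX HXc Hr.
  assert (H1 : forall j, exists s, j < n -> bij s /\
             forall b, restr X (I j) b <-> exists a, u j a /\ b = aren s a).
  { intro j. destruct (classic (j < n)) as [Hj|Hj].
    - destruct (Hr j Hj) as [s Hs]. exists s. auto.
    - exists (fun x => x). intro; contradiction. }
  set (sf := fun j => proj1_sig (constructive_indefinite_description _ (H1 j))).
  assert (Hsf : forall j, j < n -> bij (sf j) /\
             forall b, restr X (I j) b <-> exists a, u j a /\ b = aren (sf j) a).
  { intros j Hj. unfold sf. destruct constructive_indefinite_description; simpl; auto. }
  assert (H2 : forall x, exists j, (exists j', j' < n /\ nons (u j') x) -> j < n /\ nons (u j) x).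
  { intro x. destruct (classic (exists j', j' < n /\ nons (u j') x)) as [[j Hj]|Hn].
    - exists j. auto.
    - exists 0. intro; contradiction. }
  set (jf := fun x => proj1_sig (constructive_indefinite_description _ (H2 x))).
  assert (Hjf : forall j x, j < n -> nons (u j) x -> jf x = j).
  { intros j x Hj Hx. unfold jf. destruct constructive_indefinite_description as [j' Hj']; simpl.
    destruct Hj' as [Hj'1 Hj'2]; [eauto|].
    destruct (Nat.eq_dec j' j); auto. exfalso. eapply (Hnd j' j x); eauto. }
  destruct (fin_bigpar n u Hf) as [l Hl].
  set (L := flat_map (@anon M) l).
  assert (HL : forall x, In x L <-> exists a, bigpar n u a /\ In x (anon a)).
  { intro x. unfold L. rewrite in_flat_map. split; intros [a [Ha Hx]]; exists a; split; auto;
      apply Hl; auto. }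
  set (g := fun x => sf (jf x) x).
  assert (Himg : forall j a x, j < n -> u j a -> In x (anon a) ->
            exists b, restr X (I j) b /\ In (sf j x) (anon b)).
  { intros j a x Hj Ha Hx. exists (aren (sf j) a). split.
    - apply (proj2 (Hsf j Hj)). eauto.
    - rewrite aren_anon. apply in_map; auto. }
  destruct (extend_inj L g) as [s [Hs Hsg]].
  { intros x y Hx Hy E. apply HL in Hx. apply HL in Hy.
    destruct Hx as [a [[j1 [Hj1 Ha]] Hxa]]. destruct Hy as [b [[j2 [Hj2 Hb]] Hyb]].
    unfold g in E. rewrite (Hjf j1 x Hj1) in E by (exists a; auto).
    rewrite (Hjf j2 y Hj2) in E by (exists b; auto).
    destruct (Nat.eq_dec j1 j2) as [<-|Hne].
    - apply (bij_inj _ (proj1 (Hsf j1 Hj1))) in E. auto.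
    - exfalso. destruct (Himg j1 a x Hj1 Ha Hxa) as [b1 [[Hb1 Hc1] Hn1]].
      destruct (Himg j2 b y Hj2 Hb Hyb) as [b2 [[Hb2 Hc2] Hn2]].
      rewrite E in Hn1. apply (HX b1 b2 Hb1 Hb2) with (x := sf j2 y); auto.
      intro; subst. eapply (HD j1 j2); eauto. }
  assert (Hag : forall j a, j < n -> u j a -> aren s a = aren (sf j) a).
  { intros j a Hj Ha. apply aren_ext. intros x Hx. rewrite Hsg.
    - unfold g. rewrite (Hjf j x Hj); auto. exists a; auto.
    - apply HL. exists a. split; auto. exists j; auto. }
  exists s. split; auto. intro b. split.
  - intro Hb. destruct (HXc b Hb) as [j [Hj Hc]].
    destruct (proj1 (proj2 (Hsf j Hj) b) (conj Hb Hc)) as [a [Ha ->]].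
    exists a. split; [exists j; auto|]. symmetry; apply Hag; auto.
  - intros [a [[j [Hj Ha]] ->]]. rewrite (Hag j a Hj Ha).
    apply (proj2 (Hsf j Hj)). eauto.
Qed.

Lemma sep {M : Model} (S : protocol M) (X1 X2 C1 C2 : proc M) :
  is_protocol S ->
  (forall a, X1 a -> pin S Voter (ain a)) -> (forall a, X2 a -> pin S Voter (ain a)) ->
  (forall a, C1 a -> pin S Coercer (ain a)) -> (forall a, C2 a -> pin S Coercer (ain a)) ->
  par X1 C1 = par X2 C2 -> X1 = X2 /\ C1 = C2.
Proof.
  intros [HP _] H1 H2 H3 H4 E.
  assert (Ea : forall a, X1 a \/ C1 a <-> X2 a \/ C2 a).
  { intro a. change (par X1 C1 a <-> par X2 C2 a). rewrite E. tauto. }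
  assert (NC : forall a, pin S Voter (ain a) -> pin S Coercer (ain a) -> False).
  { intros a. apply HP. discriminate. }
  split; apply pext; intro a; specialize (Ea a); split; intro Ha.
  - destruct (proj1 Ea (or_introl Ha)); auto. exfalso; eauto.
  - destruct (proj2 Ea (or_introl Ha)); auto. exfalso; eauto.
  - destruct (proj1 Ea (or_intror Ha)); auto. exfalso; eauto.
  - destruct (proj2 Ea (or_intror Ha)); auto. exfalso; eauto.
Qed.

Definition Pre {M : Model} (S : protocol M) n (I O : nat -> Ch M -> Prop)
  (u : nat -> proc M) (rho : run4 M) : Prop :=
  pP S Coercer (rc rho) /\ pP S Env (re rho) /\
  runs_of S (rv rho) (rc rho) (re rho) (rpi rho) /\
  (forall a, rv rho a -> pin S Voter (ain a)) /\
  (forall j, j < n -> is_proc (I j) (O j) (u j) /\ renames (u j) (restr (rv rho) (I j))).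

Lemma chan_split {M : Model} (S : protocol M) n (I : nat -> Ch M -> Prop) i x :
  (forall x, pin S Voter x <-> exists i, i < n /\ I i x) ->
  pin S Voter x -> I i x \/ others _ n I i x.
Proof.
  intros HI Hx. apply HI in Hx. destruct Hx as [j [Hj Hx]].
  destruct (Nat.eq_dec j i) as [<-|Hne]; [auto|right; exists j; auto].
Qed.

Lemma proj_ok {M : Model} (S : protocol M) n (I O : nat -> Ch M -> Prop) u rho i :
  is_protocol S ->
  (forall x, pin S Voter x <-> exists i, i < n /\ I i x) ->
  (forall i j x, i < n -> j < n -> i <> j -> I i x -> I j x -> False) ->
  Pre S n I O u rho -> i < n ->
  cC (induced (single_voter S n I O i)) (rc (proj_run n I i rho)) /\
  cE (induced (single_voter S n I O i)) (re (proj_run n I i rho)) /\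
  cr (induced (single_voter S n I O i)) (u i) (rc (proj_run n I i rho))
     (re (proj_run n I i rho)) (proj_run n I i rho).
Proof.
  intros HS HI HD [HC [HE [[HR HF] [HV Hu]]]] Hi.
  destruct rho as [V C E pi]; simpl in *.
  assert (HVo : forall j a x, j < n -> V a -> I j (ain a) -> aout a x -> O j x).
  { intros j a x Hj Ha Hc Hx. destruct (Hu j Hj) as [[_ [Hp _]] [s [_ Hs]]].
    destruct (proj1 (Hs a) (conj Ha Hc)) as [b [Hb ->]].
    apply (proj2 (Hp b Hb)). apply (proj1 (aren_aout _ s b x)); auto. }
  assert (HCp : is_proc (pin S Coercer) (pout S Coercer) C) by (apply (proj1 (proj2 HS)); auto).
  destruct HR as [[l Hl] [_ Hdis]].
  assert (Heq : par (restr V (I i)) (par (par (restr V (others _ n I i)) C) E) = par V (par C E)).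
  { apply pext. intro a. unfold par, restr. split.
    - tauto.
    - intros [Ha|Ha]; [|tauto].
      destruct (chan_split S n I i (ain a) HI (HV a Ha)); tauto. }
  unfold induced, proj_run; simpl. split; [|split; [auto|]].
  - split; [|split].
    + apply fin_sub with (p := par V (par C E)); [exists l; auto|].
      unfold par, restr. tauto.
    + intros a [[Ha Hc]|Ha].
      * split; [right; auto|]. intros x Hx. right.
        destruct Hc as [j [Hj [Hji Hc]]]. exists j. split; auto. split; auto. eauto.
      * destruct (proj1 (proj2 HCp) a Ha) as [H1 H2]. split; [left; auto|]. intros; left; auto.
    + intros a b Ha Hb Hne. apply Hdis; auto; unfold par, restr in *; tauto.
  - split; [apply Hu; auto|]. split; [apply renames_refl|]. split; [apply renames_refl|].
    unfold runs_of. simpl. rewrite Heq. split; auto. split; [exists l; auto|split; auto].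
Qed.

Definition Pstep {M : Model} (Ti : csys M) n (alphaT : nat -> run4 M -> Prop) (a b : proc M) :=
  forall k c e rho, 1 <= k <= n -> cC Ti c -> cE Ti e -> cr Ti a c e rho -> alphaT k rho ->
  exists e' rho', cE Ti e' /\ cr Ti b c e' rho' /\ alphaT (k - 1) rho' /\ csim Ti rho rho'.

Definition Inv {M : Model} (S : protocol M) n (I O : nat -> Ch M -> Prop)
  (u : nat -> proc M) (rho : run4 M) : Prop :=
  cR (induced S) rho /\
  (forall j, j < n -> is_proc (I j) (O j) (u j) /\ renames (u j) (restr (rv rho) (I j))).

Lemma Inv_Pre {M : Model} (S : protocol M) n I O u rho :
  is_protocol S -> Inv S n I O u rho -> Pre S n I O u rho.
Proof.
  intros HS [[HV [HC [HE HR]]] Hu]. unfold Pre.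
  split; [auto|split; [auto|split; [auto|split; [|auto]]]].
  intros a Ha. apply (proj1 (proj2 HS) Voter _ HV). auto.
Qed.

Lemma Inv_ext {M : Model} (S : protocol M) n I O u u' rho :
  Inv S n I O u rho -> (forall j, j < n -> u' j = u j) -> Inv S n I O u' rho.
Proof. intros [H1 H2] E. split; auto. intros j Hj. rewrite E; auto. Qed.

Lemma step {M : Model} (S : protocol M) n (I O : nat -> Ch M -> Prop) alpha u rho i k w :
  is_protocol S ->
  (forall x, pin S Voter x <-> exists i, i < n /\ I i x) ->
  (forall i j x, i < n -> j < n -> i <> j -> I i x -> I j x -> False) ->
  (forall k rho, k <= n -> alpha k rho -> cR (induced S) rho) ->
  Inv S n I O u rho -> alpha k rho -> 1 <= k <= n -> i < n -> is_proc (I i) (O i) w ->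
  Pstep (induced (single_voter S n I O i)) n (fun k => proj_set n I i (alpha k)) (u i) w ->
  exists rho'', Inv S n I O (fun j => if Nat.eq_dec j i then w else u j) rho'' /\
    alpha (k - 1) rho'' /\ rc rho'' = rc rho /\
    steq M (chans (rc rho)) (nons (rc rho)) (rpi rho) (rpi rho'').
Proof.
  intros HS HI HD Hal Hinv Ha Hk Hi Hw HP.
  pose proof (Inv_Pre S n I O u rho HS Hinv) as Hpre.
  destruct (proj_ok S n I O u rho i HS HI HD Hpre Hi) as [HCc [HEe Hcr]].
  destruct (HP k _ _ _ Hk HCc HEe Hcr) as [e' [rho' [HE' [Hcr' [[rho'' [Ha'' ->]] Hsim]]]]].
  { exists rho; split; auto. }
  assert (HR'' : cR (induced S) rho'') by (apply (Hal (k - 1)); auto; lia).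
  destruct Hsim as [Hrc Hst]. simpl in Hrc, Hst.
  destruct Hcr' as [Hw' _]. simpl in Hw'.
  destruct Hinv as [HR Hu].
  destruct HR as [HV [HC [HE HRo]]]. destruct HR'' as [HV'' [HC'' [HE'' HRo'']]].
  assert (CV : forall (V : proc M), pP S Voter V -> forall a, V a -> pin S Voter (ain a)).
  { intros V HV0 a Ha0. apply (proj1 (proj2 HS) Voter _ HV0). auto. }
  assert (CC : forall (V : proc M), pP S Coercer V -> forall a, V a -> pin S Coercer (ain a)).
  { intros V HV0 a Ha0. apply (proj1 (proj2 HS) Coercer _ HV0). auto. }
  assert (CO : forall (V : proc M) a, restr V (others _ n I i) a -> pin S Voter (ain a)).
  { intros V a [_ [j [Hj [_ Hc]]]]. apply HI. eauto. }
  destruct (sep S _ _ _ _ HS (CO _) (CO _) (CC _ HC) (CC _ HC'') Hrc) as [E1 E2].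
  exists rho''. split; [|split; [auto|split; [auto|]]].
  - split; [split; auto|]. intros j Hj. destruct (Nat.eq_dec j i) as [->|Hne].
    + split; auto.
    + destruct (Hu j Hj) as [Hp Hr]. split; auto.
      replace (restr (rv rho'') (I j)) with (restr (rv rho) (I j)); auto.
      apply pext. intro a. unfold restr. split.
      * intros [Ha0 Hc]. assert (H0 : restr (rv rho) (others _ n I i) a).
        { split; auto. exists j; auto. }
        rewrite E1 in H0. destruct H0; auto.
      * intros [Ha0 Hc]. assert (H0 : restr (rv rho'') (others _ n I i) a).
        { split; auto. exists j; auto. }
        rewrite <- E1 in H0. destruct H0; auto.
  - eapply steq_mono; [| |exact Hst]; intros x [a [Ha0 Hx]]; exists a; split; auto; right; auto.
Qed.

Lemma hybrid {M : Model} (S : protocol M) n (I O : nat -> Ch M -> Prop) alpha u0 u1 rho0 :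
  is_protocol S ->
  (forall x, pin S Voter x <-> exists i, i < n /\ I i x) ->
  (forall i j x, i < n -> j < n -> i <> j -> I i x -> I j x -> False) ->
  (forall k rho, k <= n -> alpha k rho -> cR (induced S) rho) ->
  Inv S n I O u0 rho0 -> alpha n rho0 ->
  (forall i, i < n -> is_proc (I i) (O i) (u1 i)) ->
  (forall i, i < n -> Pstep (induced (single_voter S n I O i)) n
                        (fun k => proj_set n I i (alpha k)) (u0 i) (u1 i)) ->
  forall m, m <= n -> exists rho,
    Inv S n I O (fun j => if lt_dec j m then u1 j else u0 j) rho /\ alpha (n - m) rho /\
    rc rho = rc rho0 /\ steq M (chans (rc rho0)) (nons (rc rho0)) (rpi rho0) (rpi rho).
Proof.
  intros HS HI HD Hal Hinv Ha Hu1 HP. induction m as [|m IH]; intro Hm.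
  - exists rho0. refine (conj _ (conj _ (conj eq_refl (steq_refl _ _ _ _)))); [|rewrite Nat.sub_0_r; auto].
    eapply Inv_ext; [exact Hinv|]. intros j Hj. destruct lt_dec; [lia|auto].
  - destruct (IH ltac:(lia)) as [rho [Hi [Ha' [Hrc Hst]]]].
    assert (HP' : Pstep (induced (single_voter S n I O m)) n (fun k => proj_set n I m (alpha k))
              ((fun j => if lt_dec j m then u1 j else u0 j) m) (u1 m)).
    { destruct lt_dec; [lia|]. apply HP; lia. }
    destruct (step S n I O alpha _ rho m (n - m) (u1 m) HS HI HD Hal Hi Ha' ltac:(lia) ltac:(lia)
                (Hu1 m ltac:(lia)) HP') as [rho'' [Hi'' [Ha'' [Hrc'' Hst'']]]].
    exists rho''. refine (conj _ (conj _ (conj _ _))).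
    + eapply Inv_ext; [exact Hi''|]. intros j Hj.
      repeat match goal with |- context [if ?c then _ else _] => destruct c end;
        subst; try lia; reflexivity.
    + replace (n - Datatypes.S m) with (n - m - 1) by lia. auto.
    + congruence.
    + rewrite Hrc in Hst''. eapply steq_trans; eauto.
Qed.

Lemma class_disj n i j x y : i < n -> j < n -> i + n * x = j + n * y -> i = j.
Proof.
  intros Hi Hj E. apply (f_equal (fun z => z mod n)) in E.
  rewrite !(Nat.mul_comm n), !Nat.Div0.mod_add, !Nat.mod_small in E by lia. auto.
Qed.

Lemma class_rename {M : Model} n i (I O : Ch M -> Prop) (w : proc M) :
  i < n -> is_proc I O w ->
  exists w', renames w w' /\ (forall x, nons w' x -> exists y, x = i + n * y).
Proof.
  intros Hi [[l Hl] _].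
  destruct (extend_inj (flat_map (@anon M) l) (fun x => i + n * x)) as [s [Hs Hsg]].
  { intros x y _ _ E. apply (Nat.mul_cancel_l _ _ n); lia. }
  exists (fun b => exists a, w a /\ b = aren s a). split.
  - exists s. split; auto. tauto.
  - intros x [b [[a [Ha ->]] Hx]]. rewrite aren_anon, in_map_iff in Hx.
    destruct Hx as [y [<- Hy]]. exists y. apply Hsg. apply in_flat_map. exists a.
    split; auto. apply Hl; auto.
Qed.

Lemma Pstep_ren {M : Model} (S' : protocol M) n alphaT (a a' b b' : proc M) :
  renames a a' -> renames b b' -> Pstep (induced S') n alphaT a b -> Pstep (induced S') n alphaT a' b'.
Proof.
  intros Ha Hb HP k c e rho Hk Hc He [H1 H2] Hal.
  destruct (HP k c e rho Hk Hc He (conj (renames_trans _ _ _ Ha H1) H2) Hal)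
    as [e' [rho' [He' [[H3 H4] [Hal' Hs]]]]].
  exists e', rho'. split; auto. split; [split; auto|auto].
  eapply renames_trans; [apply renames_sym; exact Hb|exact H3].
Qed.

Lemma proj_inj {M : Model} (S : protocol M) n (I : nat -> Ch M -> Prop) i rho rho0 :
  is_protocol S ->
  (forall x, pin S Voter x <-> exists i, i < n /\ I i x) ->
  (forall a, rv rho a -> pin S Voter (ain a)) -> (forall a, rv rho0 a -> pin S Voter (ain a)) ->
  pP S Coercer (rc rho) -> pP S Coercer (rc rho0) ->
  proj_run n I i rho = proj_run n I i rho0 -> rho = rho0.
Proof.
  intros HS HI H1 H2 H3 H4 Eq. destruct rho as [V C E pi], rho0 as [V0 C0 E0 pi0].
  simpl in *. unfold proj_run in Eq. simpl in Eq. injection Eq as Ei Eo EE Epi.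
  assert (CC : forall (V : proc M), pP S Coercer V -> forall a, V a -> pin S Coercer (ain a)).
  { intros V1 HV0 a Ha0. apply (proj1 (proj2 HS) Coercer _ HV0). auto. }
  assert (CO : forall (V : proc M) a, restr V (others _ n I i) a -> pin S Voter (ain a)).
  { intros V1 a [_ [j [Hj [_ Hc]]]]. apply HI. eauto. }
  destruct (sep S _ _ _ _ HS (CO _) (CO _) (CC _ H3) (CC _ H4) Eo) as [E1 E2].
  subst. f_equal. apply pext. intro a. split; intro Ha.
  - destruct (chan_split S n I i (ain a) HI (H1 a Ha)) as [Hc|Hc].
    + assert (H : restr V (I i) a) by (split; auto). rewrite Ei in H. apply H.
    + assert (H : restr V (others _ n I i) a) by (split; auto). rewrite E1 in H. apply H.
  - destruct (chan_split S n I i (ain a) HI (H2 a Ha)) as [Hc|Hc].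
    + assert (H : restr V0 (I i) a) by (split; auto). rewrite <- Ei in H. apply H.
    + assert (H : restr V0 (others _ n I i) a) by (split; auto). rewrite <- E1 in H. apply H.
Qed.

Theorem theorem3 (M : Model) (S : protocol M) (n : nat) (I O : nat -> Ch M -> Prop)
  (alpha : nat -> run4 M -> Prop) (gamma : nat -> run4 M -> Prop) :
  is_protocol S ->
  (forall x, pin S Voter x <-> exists i, i < n /\ I i x) ->
  (forall x, pout S Voter x <-> exists i, i < n /\ O i x) ->
  (forall i j x, i < n -> j < n -> i <> j -> I i x -> I j x -> False) ->
  (forall v, pP S Voter v ->
     exists ps : nat -> proc M,
       (forall i, i < n -> is_proc (I i) (O i) (ps i)) /\
       (forall a, v a <-> bigpar n ps a)) ->
  (forall k rho, k <= n -> alpha k rho -> cR (induced S) rho) ->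
  (forall i rho, i < n -> gamma i rho -> cR (induced S) rho) ->
  (forall i, i < n ->
     coercion_resistant (induced (single_voter S n I O i)) n
       (fun k => proj_set n I i (alpha k)) (proj_set n I i (gamma i))) ->
  mv_coercion_resistant (induced S) n I O (alpha n)
    (fun rho => forall i, i < n -> gamma i rho).
Proof.
  intros HS HI HO HD _ Hal Hga HCR.
  set (good := fun i vi w =>
    is_proc (I i) (O i) w /\ (forall x, nons w x -> exists y, x = i + n * y) /\
    Pstep (induced (single_voter S n I O i)) n (fun k => proj_set n I i (alpha k)) vi w /\
    Pstep (induced (single_voter S n I O i)) n (fun k => proj_set n I i (alpha k)) w vi /\
    (forall c e rho, cC (induced (single_voter S n I O i)) c ->
       cE (induced (single_voter S n I O i)) e ->
       cr (induced (single_voter S n I O i)) w c e rho -> proj_set n I i (gamma i) rho)).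
  assert (Hex : forall i vi, exists w, (i < n /\ is_proc (I i) (O i) vi) -> good i vi w).
  { intros i vi. destruct (classic (i < n /\ is_proc (I i) (O i) vi)) as [[Hi Hvi]|Hn].
    2:{ exists vi. intro; contradiction. }
    destruct (HCR i Hi vi Hvi) as [v' [Hv' [P1 [P2 P3]]]].
    simpl in Hv'.
    destruct (class_rename n i (I i) (O i) v' Hi Hv') as [w [Hw Hcl]].
    exists w. intros _. split; [eapply renames_proc; eauto|split; [auto|split; [|split]]].
    - eapply Pstep_ren; [apply renames_refl|exact Hw|exact P1].
    - eapply Pstep_ren; [exact Hw|apply renames_refl|exact P2].
    - intros c e rho Hc He [H1 H2]. apply (P3 c e rho Hc He).
      split; auto. eapply renames_trans; eauto. }
  set (f := fun i vi => proj1_sig (constructive_indefinite_description _ (Hex i vi))).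
  assert (Hf : forall i vi, i < n -> is_proc (I i) (O i) vi -> good i vi (f i vi)).
  { intros i vi Hi Hvi. unfold f. destruct constructive_indefinite_description; simpl; auto. }
  assert (CV : forall (V : proc M), pP S Voter V -> forall a, V a -> pin S Voter (ain a)).
  { intros V HV0 a Ha0. apply (proj1 (proj2 HS) Voter _ HV0). auto. }
  exists f. split.
  { intros i vi Hi Hvi. apply (Hf i vi Hi Hvi). }
  intros vs Hvs HV. cbv zeta.
  set (u1 := fun j => f j (vs j)).
  assert (Hg : forall j, j < n -> good j (vs j) (u1 j)) by (intros; apply Hf; auto).
  assert (Hu1p : forall j, j < n -> is_proc (I j) (O j) (u1 j)) by (intros j Hj; apply (Hg j Hj)).
  assert (Chv : forall j a, j < n -> vs j a -> I j (ain a)) by (intros j a Hj Ha; apply (Hvs j Hj); auto).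
  assert (Chu : forall j a, j < n -> u1 j a -> I j (ain a)) by (intros j a Hj Ha; apply (Hu1p j Hj); auto).
  assert (Finv : forall j, j < n -> fin (vs j)) by (intros j Hj; apply (Hvs j Hj)).
  assert (Finu : forall j, j < n -> fin (u1 j)) by (intros j Hj; apply (Hu1p j Hj)).
  assert (HVp : is_proc (pin S Voter) (pout S Voter) (bigpar n vs)) by (apply (proj1 (proj2 HS)); auto).
  assert (Ndv : forall j j' x, j < n -> j' < n -> j <> j' -> nons (vs j) x -> nons (vs j') x -> False).
  { intros j j' x Hj Hj' Hne [a [Ha Hx]] [b [Hb Hx']].
    assert (Hab : a <> b) by (intro; subst; eapply (HD j j'); eauto).
    exact (proj2 (proj2 (proj2 HVp) a b (ex_intro _ j (conj Hj Ha)) (ex_intro _ j' (conj Hj' Hb)) Hab) x Hx Hx'). }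
  assert (Ndu : forall j j' x, j < n -> j' < n -> j <> j' -> nons (u1 j) x -> nons (u1 j') x -> False).
  { intros j j' x Hj Hj' Hne Hx Hx'.
    destruct (proj1 (proj2 (Hg j Hj)) x Hx) as [y Hy].
    destruct (proj1 (proj2 (Hg j' Hj')) x Hx') as [y' Hy'].
    apply Hne. apply (class_disj n j j' y y'); lia. }
  assert (Glue : forall (u : nat -> proc M) rho,
            (forall j, j < n -> fin (u j)) -> (forall j a, j < n -> u j a -> I j (ain a)) ->
            (forall j j' x, j < n -> j' < n -> j <> j' -> nons (u j) x -> nons (u j') x -> False) ->
            Inv S n I O (fun j => if lt_dec j n then u j else (fun _ => False)) rho ->
            renames (bigpar n u) (rv rho)).
  { intros u rho H1 H2 H3 [HR Hr]. destruct HR as [HVr _].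
    pose proof (proj1 (proj2 HS) Voter _ HVr) as HVrp.
    apply renames_glue with (I := I); auto.
    - intros a b Ha Hb Hne. exact (proj2 (proj2 (proj2 HVrp) a b Ha Hb Hne)).
    - intros a Ha. apply HI. apply (CV _ HVr). auto.
    - intros j Hj. destruct (Hr j Hj) as [_ Hr']. destruct lt_dec; [auto|lia]. }
  split; [|split].
  - intros c e rho Hc He Hcr Ha. destruct Hcr as [Hrv [Hrc [Hre Hro]]].
    assert (Hinv : Inv S n I O vs rho).
    { split; [apply Hal with n; auto|]. intros j Hj. split; auto.
      apply renames_decomp with (n := n); auto. }
    destruct (hybrid S n I O alpha vs u1 rho HS HI HD Hal Hinv Ha Hu1p
                (fun i Hi => proj1 (proj2 (proj2 (Hg i Hi)))) n (le_n n))
      as [rho1 [Hi1 [_ [Hrc1 Hst1]]]].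
    exists (re rho1), rho1. destruct (proj1 Hi1) as [HV1 [HC1 [HE1 HR1]]].
    split; [auto|split; [|split; [symmetry; auto|auto]]].
    split; [|split; [rewrite Hrc1; auto|split; [apply renames_refl|auto]]].
    apply Glue; auto. eapply Inv_ext; [exact Hi1|]. intros j Hj.
    repeat match goal with |- context [if ?c then _ else _] => destruct c end; try lia; reflexivity.
  - intros c e rho Hc He Hcr Ha. destruct Hcr as [Hrv [Hrc [Hre Hro]]].
    assert (Hinv : Inv S n I O u1 rho).
    { split; [apply Hal with n; auto|]. intros j Hj. split; auto.
      apply renames_decomp with (n := n); auto. }
    destruct (hybrid S n I O alpha u1 vs rho HS HI HD Hal Hinv Ha Hvs
                (fun i Hi => proj1 (proj2 (proj2 (proj2 (Hg i Hi))))) n (le_n n))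
      as [rho1 [Hi1 [_ [Hrc1 Hst1]]]].
    exists (re rho1), rho1. destruct (proj1 Hi1) as [HV1 [HC1 [HE1 HR1]]].
    split; [auto|split; [|split; [symmetry; auto|auto]]].
    split; [|split; [rewrite Hrc1; auto|split; [apply renames_refl|auto]]].
    apply Glue; auto. eapply Inv_ext; [exact Hi1|]. intros j Hj.
    repeat match goal with |- context [if ?c then _ else _] => destruct c end; try lia; reflexivity.
  - intros c e rho Hc He Hcr i Hi. destruct Hcr as [Hrv [Hrc [Hre Hro]]].
    assert (HCr : pP S Coercer (rc rho)) by (apply (proj2 (proj2 HS)) with c; auto).
    assert (HEr : pP S Env (re rho)) by (apply (proj2 (proj2 HS)) with e; auto).
    assert (HVch : forall a, rv rho a -> pin S Voter (ain a)).
    { intros a Ha. destruct Hrv as [s [_ Hs]]. apply Hs in Ha. destruct Ha as [b [[j [Hj Hb]] ->]].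
      rewrite aren_ain. apply HI. exists j. split; auto. }
    assert (Hpre : Pre S n I O u1 rho).
    { split; [auto|split; [auto|split; [auto|split; [auto|]]]].
      intros j Hj. split; auto. apply renames_decomp with (n := n); auto. }
    destruct (proj_ok S n I O u1 rho i HS HI HD Hpre Hi) as [HCc [HEe Hcr]].
    destruct (proj2 (proj2 (proj2 (proj2 (Hg i Hi)))) _ _ _ HCc HEe Hcr) as [rho0 [Hg0 E0]].
    assert (HR0 : cR (induced S) rho0) by (apply (Hga i); auto).
    destruct HR0 as [HV0 [HC0 _]].
    replace rho with rho0; auto. symmetry.
    apply (proj_inj S n I i rho rho0 HS HI HVch (CV _ HV0) HCr HC0 E0).
Qed.
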